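(* With the setup of the context, let $\mu$ be a symmetric weight on $F$, and assume that $\overline G$ and $\overline H$ both satisfy the bunkbed conjecture. Then for all $x\in V(\overline G)$ and $y\in V(\overline H)$, $\mathbb P_{F,\mu}(x^-\sim_F y^+)\le \mathbb P_{F,\mu}(x^-\sim_F y^-)$.
   Context: All graphs are finite and simple. For a graph $G$, a weight is a function $\mu\colon E(G)\to[0,1]$; the associated edge-percolation probability space has sample space $\mathscr P(E(G))$, with $\mathbb P_{G,\mu}(X)=\prod_{e\in X}\mu(e)\prod_{e\notin X}(1-\mu(e))$ for $X\subseteq E(G)$ (edges independently open, edge $e$ with probability $\mu(e)$). For vertices $x,y$, $(x\sim_G y)$ is the event that $x$ and $y$ are joined by a path of open edges of $G$. The bunkbed graph $BB(G)=G\,\Box\,K_2$ has vertex set $V(G)\times\{0,1\}$, writing $x^-=(x,0)$, $x^+=(x,1)$, with edges $x^-y^-$ and $x^+y^+$ for every $xy\in E(G)$ and vertical edges $x^-x^+$ for every $x\in V(G)$. A weight $\mu$ on $BB(G)$ is symmetric if $\mu(x^-y^-)=\mu(x^+y^+)$ for every $xy\in E(G)$. A graph $G$ satisfies the bunkbed conjecture if for every symmetric weight $\mu$ on $BB(G)$ and all $x,y\in V(G)$, $\mathbb P_{BB(G),\mu}(x^-\sim y^-)\ge \mathbb P_{BB(G),\mu}(x^-\sim y^+)$. Setup: let $\overline F$ be a graph and $v\in V(\overline F)$ a cut vertex; let $V_1,\dots,V_k$ ($k\ge2$) be the vertex sets of the components of $\overline F\setminus\{v\}$, fix $I\subseteq\{1,\dots,k\}$,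 and set $\overline G=\overline F[\bigcup_{i\in I}V_i\cup\{v\}]$, $\overline H=\overline F[\bigcup_{i\notin I}V_i\cup\{v\}]$ (induced subgraphs). Let $F=BB(\overline F)$, $G=BB(\overline G)$, $H=BB(\overline H)$, regarded as subgraphs of $F$. *)

(* Defs.v *)
From HB Require Import structures.
From mathcomp Require Import all_boot all_order all_algebra.
From mathcomp Require Import reals.
Set Implicit Arguments. Unset Strict Implicit. Unset Printing Implicit Defensive.
Import Order.TTheory GRing.Theory Num.Theory.
Local Open Scope ring_scope.

Section Percolation.
Variables (R : realType) (U : finType).

Definition percP (E : {set {set U}}) (mu : {set U} -> R) (X : {set {set U}}) : R :=
  (\prod_(f in X) mu f) * \prod_(f in E :\: X) (1 - mu f).

Definition open_conn (X : {set {set U}}) (a b : U) : bool :=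
  connect (fun u w => [set u; w] \in X) a b.

Definition perc_conn (E : {set {set U}}) (mu : {set U} -> R) (a b : U) : R :=
  \sum_(X in powerset E) percP E mu X * (open_conn X a b)%:R.

Definition is_weight (E : {set {set U}}) (mu : {set U} -> R) : Prop :=
  forall f, f \in E -> 0 <= mu f <= 1.
End Percolation.

Definition edges_in (T : finType) (e : rel T) (A : {set T}) : {set {set T}} :=
  [set [set x; y] | x in A, y in A & e x y].

Section Graphs.
Variables (T : finType) (e : rel T).


(* bunkbed relation on T * bool : x^- = (x,false), x^+ = (x,true) *)
Definition bb_rel : rel (T * bool) :=
  fun u w => ((u.2 == w.2) && e u.1 w.1) || ((u.1 == w.1) && (u.2 != w.2)).

(* edge set of BB(G[A]) (which is the subgraph of BB induced on A x bool) *)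
Definition bb_edges (A : {set T}) : {set {set (T * bool)}} :=
  @edges_in (T * bool)%type bb_rel (setX A [set: bool]).

Definition bb_symmetric (R : realType) (A : {set T}) (mu : {set (T * bool)} -> R) : Prop :=
  forall x y, x \in A -> y \in A -> e x y ->
    mu [set (x, false); (y, false)] = mu [set (x, true); (y, true)].

Definition bunkbed_holds (R : realType) (A : {set T}) : Prop :=
  forall mu : {set (T * bool)} -> R,
    is_weight (bb_edges A) mu -> bb_symmetric A mu ->
    forall x y, x \in A -> y \in A ->
      perc_conn (bb_edges A) mu (x, false) (y, true)
      <= perc_conn (bb_edges A) mu (x, false) (y, false).

Definition conn_in (A : {set T}) (x y : T) : bool :=
  connect (fun u w => [&& u \in A, w \in A & e u w]) x y.

Definition components (A : {set T}) : {set {set T}} :=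
  [set [set y in A | conn_in A x y] | x in A].

Definition cut_vertex (v : T) : bool :=
  (#|components [set: T]| < #|components [set~ v]|)%N.
End Graphs.

(* Main.v *)
Require Import Defs.
From HB Require Import structures.
From mathcomp Require Import all_boot all_order all_algebra.
From mathcomp Require Import reals ring.
Import Order.TTheory GRing.Theory Num.Theory.
Set Implicit Arguments. Unset Strict Implicit. Unset Printing Implicit Defensive.

Module Aux.
Section Conn.
Variable U : finType.
Implicit Types (X Y : {set {set U}}) (a b u w t : U).

Lemma rX_sym X : symmetric (fun u w => [set u; w] \in X).
Proof. by move=> u w; rewrite setUC. Qed.

Lemma oc_sym X a b : open_conn X a b = open_conn X b a.
Proof. exact: (sym_connect_sym (rX_sym X)). Qed.

Lemma oc_refl X a : open_conn X a a.
Proof. exact: connect0. Qed.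

Lemma oc_trans X a t b : open_conn X a t -> open_conn X t b -> open_conn X a b.
Proof. exact: connect_trans. Qed.

Lemma oc_edge X a b : [set a; b] \in X -> open_conn X a b.
Proof. exact: connect1. Qed.

Lemma oc_mono X Y a b : X \subset Y -> open_conn X a b -> open_conn Y a b.
Proof.
move=> sXY; apply: connect_sub => u w h; apply: connect1.
exact: (subsetP sXY).
Qed.

Lemma oc_stay X (V : {set U}) a b :
  (forall u w, [set u; w] \in X -> (u \in V) && (w \in V)) ->
  open_conn X a b -> a \in V -> b \in V.
Proof.
move=> hX hab aV.
have cl : closed (fun u w => [set u; w] \in X) V.
  by move=> u w /hX /andP[-> ->].
by rewrite -(closed_connect cl hab).
Qed.

Lemma oc_homo (h : U -> U) X Y a b :
  (forall u w, [set u; w] \in X -> [set h u; h w] \in Y) ->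
  open_conn X a b -> open_conn Y (h a) (h b).
Proof.
move=> hXY /connectP[p pp ->]; elim: p a pp => [|z p IH] a /=.
  by move=> _; exact: connect0.
case/andP=> eaz /IH; apply: connect_trans; apply: connect1; exact: hXY.
Qed.

Definition Cf (g1 g2 gc h1 h2 hc n : bool) :=
  [|| g1 && h1, g2 && h2 | [&& g1 || g2, h1 || h2 & [|| n, gc | hc]]].

Variables (V1 V2 : {set U}) (s1 s2 : U).
Hypothesis hs : [&& s1 \in V1, s2 \in V1, s1 \in V2 & s2 \in V2].
Hypothesis hV : forall u, u \in V1 -> u \in V2 -> (u == s1) || (u == s2).

Lemma S_link X t u : (t == s1) || (t == s2) -> (u == s1) || (u == s2) ->
  open_conn X t u -> (t == u) || open_conn X s1 s2.
Proof.
case/orP=> /eqP-> /orP[]/eqP-> h; rewrite ?eqxx ?h ?orbT //.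
by rewrite oc_sym h orbT.
Qed.

Lemma Cf_fin1 (g1 g2 gc h1 h2 hc n : bool) :
  g1 || (g1 || g2) && [|| n, gc | hc] -> h1 -> Cf g1 g2 gc h1 h2 hc n.
Proof. by case: g1; case: g2; case: gc; case: h1; case: h2; case: hc; case: n. Qed.
Lemma Cf_fin2 (g1 g2 gc h1 h2 hc n : bool) :
  g2 || (g1 || g2) && [|| n, gc | hc] -> h2 -> Cf g1 g2 gc h1 h2 hc n.
Proof. by case: g1; case: g2; case: gc; case: h1; case: h2; case: hc; case: n. Qed.

Lemma conn_split X1 X2 X3 a b :
  (forall u w, [set u; w] \in X1 -> (u \in V1) && (w \in V1)) ->
  (forall u w, [set u; w] \in X2 -> (u \in V2) && (w \in V2)) ->
  X3 \subset [set [set s1; s2]] -> a \in V1 -> b \in V2 ->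
  open_conn (X1 :|: X2 :|: X3) a b =
  Cf (open_conn X1 a s1) (open_conn X1 a s2) (open_conn X1 s1 s2)
     (open_conn X2 b s1) (open_conn X2 b s2) (open_conn X2 s1 s2)
     ([set s1; s2] \in X3).
Proof.
move=> hX1 hX2 hX3 aV bV.
case/and4P: hs => s1V1 s2V1 s1V2 s2V2.
set X := X1 :|: X2 :|: X3.
have s1X : X1 \subset X by rewrite /X -setUA; apply: subsetUl.
have s2X : X2 \subset X by rewrite /X -setUA setUCA; apply: subsetUl.
have s3X : X3 \subset X by rewrite /X; apply: subsetUr.
set g1 := open_conn X1 a s1; set g2 := open_conn X1 a s2.
set gc := open_conn X1 s1 s2; set h1 := open_conn X2 b s1.
set h2 := open_conn X2 b s2; set hc := open_conn X2 s1 s2.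
set n := [set s1; s2] \in X3.
apply/idP/idP.
-
  set m := [|| n, gc | hc].
  pose inS t := (t == s1) || (t == s2).
  pose r t := open_conn X1 a t || (g1 || g2) && m.
  have gS : forall t, inS t -> open_conn X1 a t -> g1 || g2.
    by move=> t /orP[]/eqP-> h; rewrite /g1 /g2 h ?orbT.
  have SV1 : forall t, inS t -> t \in V1 by move=> t /orP[]/eqP->.
  have SV2 : forall t, inS t -> t \in V2 by move=> t /orP[]/eqP->.
  have rmove : forall t u, inS t -> inS u -> r t ->
      (open_conn X1 t u || open_conn X2 t u) -> r u.
    move=> t u ht hu hr /orP[] hc';
      case/orP: (S_link ht hu hc') => [/eqP<-//|hm'];
      (have hmm : m by rewrite /m /gc /hc hm' ?orbT);
      (have hg : g1 || g2 by case/orP: hr => [/(gS _ ht)//|/andP[]]);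
      by rewrite /r hg hmm orbT.
  pose Q w := open_conn X1 a w ||
    [exists t, [&& inS t, r t & open_conn X1 t w || open_conn X2 t w]].
  have step : forall u w, [set u; w] \in X -> Q u -> Q w.
    move=> u w; rewrite !inE => /orP[/orP[e1|e2]|e3] Qu.
    - have /andP[uV1 wV1] := hX1 _ _ e1.
      have c1uw := oc_edge e1.
      case/orP: Qu => [hau | /existsP[t /and3P[ht hr hct]]].
      + by rewrite /Q (oc_trans hau c1uw).
      + apply/orP; right; case/orP: hct => hct.
        * by apply/existsP; exists t; apply/and3P; split=> //; rewrite (oc_trans hct c1uw).
        * have uV2 := oc_stay hX2 hct (SV2 _ ht).
          have hu := hV uV1 uV2.
          apply/existsP; exists u; apply/and3P; split=> //; last by rewrite c1uw.
          by apply: (rmove t u ht hu hr); rewrite hct orbT.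
    - have /andP[uV2 wV2] := hX2 _ _ e2.
      have c2uw := oc_edge e2.
      case/orP: Qu => [hau | /existsP[t /and3P[ht hr hct]]].
      + have uV1 := oc_stay hX1 hau aV.
        have hu := hV uV1 uV2.
        apply/orP; right; apply/existsP; exists u; apply/and3P; split=> //.
          by rewrite /r hau.
        by rewrite c2uw orbT.
      + apply/orP; right; case/orP: hct => hct.
        * have uV1 := oc_stay hX1 hct (SV1 _ ht).
          have hu := hV uV1 uV2.
          apply/existsP; exists u; apply/and3P; split=> //; last by rewrite c2uw orbT.
          by apply: (rmove t u ht hu hr); rewrite hct.
        * by apply/existsP; exists t; apply/and3P; split=> //; rewrite (oc_trans hct c2uw) orbT.
    - have := subsetP hX3 _ e3; rewrite inE => /eqP huw.
      have hu : inS u by rewrite /inS -in_set2 -huw in_set2 eqxx.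
      have hw : inS w by rewrite /inS -in_set2 -huw in_set2 eqxx orbT.
      have hn : n by rewrite /n -huw.
      have hg : g1 || g2.
        case/orP: Qu => [hau | /existsP[t /and3P[ht hr hct]]].
        + exact: gS hu hau.
        + by case/orP: hr => [/(gS _ ht)//|/andP[]].
      apply/orP; right; apply/existsP; exists w; apply/and3P; split=> //.
        by rewrite /r hg /m hn orbT.
      by rewrite oc_refl.
  pose Qp : {pred U} := [pred w | Q w].
  have clQ : closed (fun u w => [set u; w] \in X) Qp.
    move=> u w huw; apply/idP/idP; first exact: step huw.
    by apply: step; rewrite setUC.
  move=> hab.
  have Qb : Q b.
    have := closed_connect clQ hab; rewrite !inE => <-.
    by rewrite /Q oc_refl.
  have F : forall t, inS t -> r t -> open_conn X2 b t ->
      Cf g1 g2 gc h1 h2 hc n.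
    move=> t /orP[]/eqP-> hr hbt.
    + by apply: Cf_fin1.
    + by apply: Cf_fin2.
  case/orP: Qb => [hab1 | /existsP[t /and3P[ht hr hct]]].
  + have bV1 := oc_stay hX1 hab1 aV.
    have hb := hV bV1 bV.
    by apply: (F b hb); rewrite ?/r ?hab1 ?oc_refl.
  + case/orP: hct => hct.
    * have bV1 := oc_stay hX1 hct (SV1 _ ht).
      have hb := hV bV1 bV.
      apply: (F b hb (rmove t b ht hb hr _)); [by rewrite hct | exact: oc_refl].
    * by apply: (F t ht hr); rewrite oc_sym.
-
  have m12 : [|| n, gc | hc] -> open_conn X s1 s2.
    case/or3P=> h.
    + exact/oc_edge/(subsetP s3X).
    + exact: oc_mono s1X h.
    + exact: oc_mono s2X h.
  have key : forall t t', open_conn X1 a t -> open_conn X2 b t' ->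
      (t == t') || open_conn X t t' -> open_conn X a b.
    move=> t t' hat hbt' htt'.
    apply: (oc_trans (oc_mono s1X hat)).
    rewrite oc_sym; apply: (oc_trans (oc_mono s2X hbt')).
    rewrite oc_sym; case/orP: htt' => [/eqP->|//]; exact: oc_refl.
  case/or3P.
  + by case/andP=> hg hh; apply: (key s1 s1) => //; rewrite eqxx.
  + by case/andP=> hg hh; apply: (key s2 s2) => //; rewrite eqxx.
  + case/and3P=> /orP[hg|hg] /orP[hh|hh] /m12 hm.
    * by apply: (key s1 s1) => //; rewrite eqxx.
    * by apply: (key s1 s2) => //; rewrite hm orbT.
    * by apply: (key s2 s1) => //; rewrite oc_sym hm orbT.
    * by apply: (key s2 s2) => //; rewrite eqxx.
Qed.
End Conn.
Local Open Scope ring_scope.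
Section Sums.
Variable R : realType.
Variable U : finType.
Local Notation K := {set U}.
Implicit Types (A B X Y : {set K}).

Lemma bigU_set (F : K -> R) A B : [disjoint A & B] ->
  \prod_(i in A :|: B) F i = (\prod_(i in A) F i) * \prod_(i in B) F i.
Proof.
move=> dAB; rewrite -bigU //; apply: eq_bigl => i; by rewrite !inE.
Qed.

Lemma setUIl_disj A B X1 X2 : [disjoint A & B] -> X1 \subset A -> X2 \subset B ->
  (X1 :|: X2) :&: A = X1.
Proof.
move=> dAB s1 s2; apply/setP=> z; rewrite !inE.
case z1: (z \in X1); first by rewrite (subsetP s1 _ z1).
case z2: (z \in X2) => //=.
by rewrite (disjointFl dAB (subsetP s2 _ z2)).
Qed.

Lemma sum_powU (F : {set K} -> R) A B : [disjoint A & B] ->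
  \sum_(X in powerset (A :|: B)) F X =
  \sum_(X1 in powerset A) \sum_(X2 in powerset B) F (X1 :|: X2).
Proof.
move=> dAB.
rewrite pair_big_dep /=.
rewrite (reindex_onto (fun p : {set K} * {set K} => p.1 :|: p.2)
          (fun X => (X :&: A, X :&: B))) /=; last first.
  move=> X; rewrite powersetE => sX.
  by rewrite -setIUr (setIidPl sX).
apply: eq_bigl => [[X1 X2]] /=; rewrite !powersetE.
apply/idP/idP.
- case/andP=> _ /eqP [<- <-]; by rewrite subsetIr subsetIr.
- case/andP=> s1 s2.
  rewrite subUset (subset_trans s1 (subsetUl _ _)) (subset_trans s2 (subsetUr _ _)) /=.
  rewrite (setUIl_disj dAB s1 s2) setUC (setUIl_disj _ s2 s1) //.
  by rewrite disjoint_sym.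
Qed.

Lemma percPU (mu : K -> R) A B X1 X2 : [disjoint A & B] ->
  X1 \subset A -> X2 \subset B ->
  percP (A :|: B) mu (X1 :|: X2) = percP A mu X1 * percP B mu X2.
Proof.
move=> dAB s1 s2; rewrite /percP.
have d12 : [disjoint X1 & X2].
  by apply: (disjointW s1 s2).
have eD : (A :|: B) :\: (X1 :|: X2) = (A :\: X1) :|: (B :\: X2).
  apply/setP=> z; rewrite !inE.
  case zA: (z \in A); case zB: (z \in B);
  case z1: (z \in X1); case z2: (z \in X2) => //=;
  try by rewrite (disjointFr dAB zA) in zB.
  all: try by rewrite (subsetP s2 _ z2) in zB.
  all: try by rewrite (subsetP s1 _ z1) in zA.
rewrite eD bigU_set // bigU_set //; last first.
  apply: (disjointW _ _ dAB); exact: subsetDl.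
by rewrite mulrACA.
Qed.

Lemma sum_pow1 (F : {set K} -> R) (k : K) :
  \sum_(X in powerset [set k]) F X = F set0 + F [set k].
Proof.
rewrite powerset1 big_setU1 ?big_set1 // !inE eq_sym.
by apply/negP=> /eqP/setP/(_ k); rewrite !inE eqxx.
Qed.

Lemma percP1_0 (mu : K -> R) k : percP [set k] mu set0 = 1 - mu k.
Proof. by rewrite /percP big_set0 mul1r setD0 big_set1. Qed.

Lemma percP1_1 (mu : K -> R) k : percP [set k] mu [set k] = mu k.
Proof. by rewrite /percP big_set1 setDv big_set0 mulr1. Qed.
End Sums.

Lemma sum3 (R : comRingType) (I1 I2 I3 : finType) (P1 : pred I1) (P2 : pred I2) (P3 : pred I3)
  (a : I1 -> R) (b : I2 -> R) (c : I3 -> R) :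
  \sum_(i | P1 i) \sum_(j | P2 j) \sum_(k | P3 k) (a i * b j * c k) =
  (\sum_(i | P1 i) a i) * (\sum_(j | P2 j) b j) * (\sum_(k | P3 k) c k).
Proof.
rewrite mulr_suml mulr_suml; apply: eq_bigr => i _.
rewrite -mulrA mulr_suml mulr_sumr; apply: eq_bigr => j _.
by rewrite mulrA mulr_sumr.
Qed.

Lemma Cf_diff (R : comRingType) (g1 g2 gc h1 h2 hc n : bool) :
  (gc -> g1 = g2) -> (hc -> h1 = h2) ->
  (Cf g1 g2 gc h1 h2 hc n)%:R - (Cf g1 g2 gc h2 h1 hc n)%:R
    = (1 - (n%:R : R)) * (g1%:R - g2%:R) * (h1%:R - h2%:R).
Proof.
case: gc => [/(_ isT) ->|_]; case: hc => [/(_ isT) ->|_];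
  case: g1; case: g2; case: h1; case: h2; case: n;
  rewrite /Cf /= ?mulr1n ?mulr0n; ring.
Qed.

Section Graph.
Variables (T : finType) (e : rel T).
Hypotheses (e_sym : symmetric e) (e_irr : irreflexive e).
Variable v : T.
Variable I : {set {set T}}.
Hypothesis hI : I \subset components e [set~ v].

Let A := [set~ v].
Definition comp w := [set y in A | conn_in e A w y].
Let Gb := v |: \bigcup_(C in I) C.
Let Hb := v |: \bigcup_(C in components e [set~ v] :\: I) C.

Lemma cin_sym : connect_sym (fun u w => [&& u \in A, w \in A & e u w]).
Proof.
apply: sym_connect_sym => u w; rewrite e_sym.
by case: (u \in A); case: (w \in A).
Qed.

Lemma comp_eq x w : w \in comp x -> comp x = comp w.
Proof.
rewrite inE => /andP[_ hxw]; apply/setP=> z; rewrite !inE.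
case: (z != v) => //=.
apply/idP/idP => h.
- by rewrite /conn_in cin_sym in hxw; apply: connect_trans hxw h.
- exact: connect_trans hxw h.
Qed.

Lemma in_comp w : w != v -> w \in comp w.
Proof. by move=> hw; rewrite inE !inE hw /conn_in connect0. Qed.

Lemma comp_in w : w != v -> comp w \in components e [set~ v].
Proof. by move=> hw; apply/imsetP; exists w => //; rewrite !inE. Qed.

Lemma memG w : w != v -> (w \in Gb) = (comp w \in I).
Proof.
move=> hw; rewrite /Gb !inE (negbTE hw) /=.
apply/bigcupP/idP.
- case=> C hC hwC.
  have := subsetP hI _ hC => /imsetP[x _ Cx].
  have hC' : C = comp w by rewrite Cx; apply: comp_eq; rewrite /comp /A -Cx.
  by rewrite -hC'.
- by move=> h; exists (comp w) => //; apply: in_comp.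
Qed.

Lemma memH w : w != v -> (w \in Hb) = (comp w \notin I).
Proof.
move=> hw; rewrite /Hb !inE (negbTE hw) /=.
apply/bigcupP/idP.
- case=> C; rewrite inE => /andP[hCI /imsetP[x _ Cx]] hwC.
  have hC' : C = comp w by rewrite Cx; apply: comp_eq; rewrite /comp /A -Cx.
  by rewrite -hC'.
- move=> h; exists (comp w); last by apply: in_comp.
  by rewrite inE h comp_in.
Qed.

Lemma vG : v \in Gb. Proof. by rewrite !inE eqxx. Qed.
Lemma vH : v \in Hb. Proof. by rewrite !inE eqxx. Qed.

Lemma GH_cover w : (w \in Gb) || (w \in Hb).
Proof.
case: (eqVneq w v) => [->|hw]; first by rewrite vG.
by rewrite memG // memH //; case: (comp w \in I).
Qed.

Lemma GH_inter w : w \in Gb -> w \in Hb -> w = v.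
Proof.
case: (eqVneq w v) => [//|hw].
by rewrite memG // memH // => ->.
Qed.

Lemma adj_side w w' : e w w' -> (w \in Gb) && (w' \in Gb) || (w \in Hb) && (w' \in Hb).
Proof.
move=> hww'.
case: (eqVneq w v) => [->|hw].
  by rewrite vG vH /=; case/orP: (GH_cover w') => ->; rewrite ?orbT.
case: (eqVneq w' v) => [->|hw'].
  by rewrite vG vH /= !andbT; case/orP: (GH_cover w) => ->; rewrite ?orbT.
have hc : comp w' = comp w.
  symmetry; apply: comp_eq; rewrite inE !inE hw' /=.
  by apply: connect1; rewrite !inE hw hw'.
by rewrite memG // memG // memH // memH // hc; case: (comp w \in I).
Qed.

Local Notation U := (T * bool)%type.

Lemma bb_edgeP (B : {set T}) f : f \in bb_edges e B ->
  exists p q : U, [/\ f = [set p; q], p.1 \in B, q.1 \in B & bb_rel e p q].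
Proof.
case/imset2P=> p q; rewrite !inE !andbT => pB /andP[qB hpq] ->.
by exists p, q; split.
Qed.

Lemma bb_edge_mem (B : {set T}) (p q : U) :
  p.1 \in B -> q.1 \in B -> bb_rel e p q -> [set p; q] \in bb_edges e B.
Proof.
move=> pB qB hpq; apply/imset2P; exists p q => //.
- by rewrite !inE pB.
- by rewrite !inE qB hpq.
Qed.

Lemma set2_mem (u w p q : U) : [set u; w] = [set p; q] -> (u == p) || (u == q).
Proof. by move=> h; have := set21 u w; rewrite h !inE. Qed.

Lemma bb_ends (B : {set T}) (u w : U) :
  [set u; w] \in bb_edges e B -> (u.1 \in B) && (w.1 \in B).
Proof.
case/bb_edgeP=> p [q [h pB qB _]].
have hu := set2_mem h; rewrite setUC in h; have hw := set2_mem h.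
by case/orP: hu => /eqP->; case/orP: hw => /eqP->; rewrite ?pB ?qB.
Qed.

Lemma bb_irr (p : U) : bb_rel e p p = false.
Proof. by rewrite /bb_rel e_irr !eqxx andbF. Qed.

Let nu : {set U} := [set (v, false); (v, true)].
Let E1 := bb_edges e Gb :\ nu.
Let E2 := bb_edges e Hb :\ nu.
Let V1 := setX Gb [set: bool].
Let V2 := setX Hb [set: bool].

Lemma nu_E (B : {set T}) : v \in B -> nu \in bb_edges e B.
Proof. by move=> vB; apply: bb_edge_mem => //; rewrite /bb_rel /= eqxx. Qed.

Lemma hX1 (X : {set {set U}}) (u w : U) : X \subset E1 -> [set u; w] \in X -> (u \in V1) && (w \in V1).
Proof.
move=> sX /(subsetP sX); rewrite inE => /andP[_ /bb_ends].
by rewrite !inE !andbT.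
Qed.

Lemma hX2 (X : {set {set U}}) (u w : U) : X \subset E2 -> [set u; w] \in X -> (u \in V2) && (w \in V2).
Proof.
move=> sX /(subsetP sX); rewrite inE => /andP[_ /bb_ends].
by rewrite !inE !andbT.
Qed.

Lemma hVV (u : U) : u \in V1 -> u \in V2 -> (u == (v, false)) || (u == (v, true)).
Proof.
case: u => a b; rewrite /V1 /V2 !in_setX !in_setT !andbT => h1 h2.
by rewrite (GH_inter h1 h2); case: b; rewrite eqxx ?orbT.
Qed.

Lemma hs12 : [&& (v, false) \in V1, (v, true) \in V1, (v, false) \in V2 & (v, true) \in V2].
Proof. by rewrite /V1 /V2 !in_setX !in_setT /= vG vH. Qed.

Lemma disj12 : [disjoint E1 & E2].
Proof.
apply/pred0P => f /=; apply/negP => /andP[].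
rewrite /E1 /E2 !in_setD1 => /andP[fnu fG] /andP[_ fH].
case/bb_edgeP: (fG) => p [q [hf _ _ hpq]].
rewrite hf in fH fnu fG.
have /andP[pV1 qV1] : (p \in V1) && (q \in V1).
  apply: (@hX1 [set [set p; q]]); last by rewrite inE.
  by rewrite sub1set /E1 in_setD1 fnu fG.
have /andP[pV2 qV2] : (p \in V2) && (q \in V2).
  apply: (@hX2 [set [set p; q]]); last by rewrite inE.
  by rewrite sub1set /E2 in_setD1 fnu fH.
move: fnu hpq; rewrite /nu.
case/orP: (hVV pV1 pV2) => /eqP->; case/orP: (hVV qV1 qV2) => /eqP->;
  rewrite ?bb_irr ?eqxx //.
by rewrite setUC eqxx.
Qed.

Lemma E_split : bb_edges e [set: T] = (E1 :|: E2) :|: [set nu].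
Proof.
apply/setP=> f; rewrite !inE.
case: (eqVneq f nu) => [->|fnu] /=; first by rewrite nu_E ?inE ?orbT.
rewrite orbF; apply/idP/idP.
- case/bb_edgeP=> p [q [-> _ _ hpq]].
  have hpq' := hpq.
  move: hpq'; rewrite /bb_rel => /orP[/andP[_ hpq']|/andP[/eqP h12 _]].
  + case/orP: (adj_side hpq') => /andP[p1 q1].
    * by rewrite bb_edge_mem.
    * by rewrite (@bb_edge_mem Hb) ?orbT.
  + case/orP: (GH_cover p.1) => p1.
    * by rewrite bb_edge_mem // -h12.
    * by rewrite (@bb_edge_mem Hb) ?orbT // -h12.
- by case/orP=> /bb_edgeP[p [q [-> _ _ hpq]]]; apply: bb_edge_mem.
Qed.

Lemma EB_split (B : {set T}) : v \in B ->
  bb_edges e B = (bb_edges e B :\ nu) :|: [set nu].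
Proof. by move=> vB; rewrite setUC setD1K // nu_E. Qed.

Lemma disjD1 (S : {set {set U}}) : [disjoint S :\ nu & [set nu]].
Proof. by rewrite disjoint_sym disjoints1 !inE eqxx. Qed.

Lemma disj12nu : [disjoint E1 :|: E2 & [set nu]].
Proof. by rewrite disjoint_sym disjoints1 !inE !eqxx. Qed.

Definition fl (p : U) : U := (p.1, ~~ p.2).
Definition fS (f : {set U}) : {set U} := fl @: f.
Definition fSS (X : {set {set U}}) : {set {set U}} := fS @: X.

Lemma flK : involutive fl. Proof. by case=> a b; rewrite /fl /= negbK. Qed.
Lemma fSK : involutive fS.
Proof. by move=> f; rewrite /fS -imset_comp (eq_imset _ flK) imset_id. Qed.
Lemma fSSK : involutive fSS.
Proof. by move=> X; rewrite /fSS -imset_comp (eq_imset _ fSK) imset_id. Qed.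

Lemma mem_fSS (X : {set {set U}}) (f : {set U}) : (f \in fSS X) = (fS f \in X).
Proof. by rewrite -{1}(fSK f) /fSS mem_imset //; apply: inv_inj fSK. Qed.

Lemma fS2 (p q : U) : fS [set p; q] = [set fl p; fl q].
Proof. by rewrite /fS imsetU1 imset_set1. Qed.

Lemma fS_nu : fS nu = nu.
Proof. by rewrite /nu fS2 /fl /= setUC. Qed.

Lemma fS_bb1 (B : {set T}) (f : {set U}) : f \in bb_edges e B -> fS f \in bb_edges e B.
Proof.
case/bb_edgeP=> p [q [-> pB qB hpq]]; rewrite fS2; apply: bb_edge_mem => //.
by move: hpq; rewrite /bb_rel /fl /=; case: (p.2); case: (q.2).
Qed.

Lemma fS_bb (B : {set T}) (f : {set U}) : (fS f \in bb_edges e B) = (f \in bb_edges e B).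
Proof.
apply/idP/idP; last exact: fS_bb1.
by move/fS_bb1; rewrite fSK.
Qed.

Lemma fS_E2 (f : {set U}) : (fS f \in E2) = (f \in E2).
Proof.
rewrite !inE fS_bb -{1}fS_nu (inj_eq (inv_inj fSK)) //.
Qed.

Lemma fSS_E2 : fSS E2 = E2.
Proof. by apply/setP=> f; rewrite mem_fSS fS_E2. Qed.

Lemma oc_fSS (X : {set {set U}}) (u w : U) : open_conn (fSS X) u w = open_conn X (fl u) (fl w).
Proof.
apply/idP/idP => h.
- apply: (oc_homo _ h) => a b; rewrite mem_fSS fS2 //.
- rewrite -(flK u) -(flK w); apply: (oc_homo _ h) => a b hab.
  by rewrite mem_fSS fS2 !flK.
Qed.

Lemma bb_sub (B : {set T}) (f : {set U}) : f \in bb_edges e B -> f \in bb_edges e [set: T].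
Proof. by case/bb_edgeP=> p [q [-> _ _ hpq]]; apply: bb_edge_mem; rewrite ?inE. Qed.

Lemma E2_sub (f : {set U}) : f \in E2 -> f \in bb_edges e [set: T].
Proof. by rewrite /E2 in_setD1 => /andP[_ /bb_sub]. Qed.

Lemma E1_sub (f : {set U}) : f \in E1 -> f \in bb_edges e [set: T].
Proof. by rewrite /E1 in_setD1 => /andP[_ /bb_sub]. Qed.

Section Weights.
Variable R : realType.
Variable mu : {set U} -> R.
Hypothesis hmu : is_weight (bb_edges e [set: T]) mu.
Hypothesis hsym : bb_symmetric e [set: T] mu.

Lemma mu_fS (f : {set U}) : f \in bb_edges e [set: T] -> mu (fS f) = mu f.
Proof.
case/bb_edgeP=> [[a b]] [[c d]] [-> _ _ /=]; rewrite fS2 /fl /=.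
rewrite /bb_rel /= => /orP[/andP[/eqP <- hac]|/andP[/eqP <- hbd]].
- by case: b; rewrite /= (hsym (x:=a) (y:=c)) ?inE.
- by move: hbd; case: b; case: d => //= _; rewrite setUC.
Qed.

Lemma percP_fSS (X : {set {set U}}) : X \subset E2 -> percP E2 mu (fSS X) = percP E2 mu X.
Proof.
move=> sX; rewrite /percP.
have eD : E2 :\: fSS X = fSS (E2 :\: X).
  by apply/setP=> f; rewrite mem_fSS !in_setD mem_fSS fS_bb !in_set1 -[in RHS]fS_nu (inj_eq (inv_inj fSK)).
have fSi : {in predT &, injective fS} by move=> f g _ _; apply: (inv_inj fSK).
rewrite eD /fSS !big_imset; try (by move=> f g _ _; apply: (inv_inj fSK)).
congr (_ * _); apply: eq_bigr => f hf; rewrite mu_fS //.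
- exact: E2_sub (subsetP sX _ hf).
- by move: hf; rewrite in_setD => /andP[_ /E2_sub].
Qed.

Lemma sum_flip (F : {set {set U}} -> R) :
  \sum_(X in powerset E2) F X = \sum_(X in powerset E2) F (fSS X).
Proof.
rewrite (reindex_inj (inv_inj fSSK)); apply: eq_bigl => X; rewrite !powersetE.
apply/subsetP/subsetP => h f hf.
- have : fS f \in fSS X by rewrite mem_fSS fSK.
  by move/h; rewrite fS_E2.
- by move: hf; rewrite mem_fSS => /h; rewrite fS_E2.
Qed.

Lemma drop0 (E0 : {set {set U}}) (k : {set U}) (a s : U) : k \notin E0 ->
  perc_conn (E0 :|: [set k]) (fun f => if f == k then 0 else mu f) a s =
  \sum_(X in powerset E0) percP E0 mu X * (open_conn X a s)%:R.
Proof.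
move=> kE.
have dk : [disjoint E0 & [set k]] by rewrite disjoint_sym disjoints1.
rewrite /perc_conn sum_powU //.
apply: eq_bigr => X1; rewrite powersetE => s1.
rewrite sum_pow1 !percPU ?sub0set ?subxx //.
rewrite percP1_0 percP1_1 /= eqxx subr0 mulr1 mulr0 mul0r addr0 setU0.
congr (_ * _); rewrite /percP; congr (_ * _); apply: eq_bigr => f hf.
- have fk : f != k by apply: contraNneq kE => <-; apply: (subsetP s1).
  by rewrite (negbTE fk).
- have fk : f != k.
    by apply: contraNneq kE => <-; move: hf; rewrite in_setD => /andP[].
  by rewrite (negbTE fk).
Qed.

Lemma Pform (a b : U) : a \in V1 -> b \in V2 ->
  perc_conn (bb_edges e [set: T]) mu a b =
  \sum_(X1 in powerset E1) \sum_(X2 in powerset E2) \sum_(X3 in powerset [set nu])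
     (percP E1 mu X1 * percP E2 mu X2 * percP [set nu] mu X3 *
     (Cf (open_conn X1 a (v,false)) (open_conn X1 a (v,true)) (open_conn X1 (v,false) (v,true))
         (open_conn X2 b (v,false)) (open_conn X2 b (v,true)) (open_conn X2 (v,false) (v,true))
         (nu \in X3))%:R).
Proof.
move=> aV bV.
rewrite /perc_conn E_split sum_powU ?disj12nu // sum_powU ?disj12 //.
apply: eq_bigr => X1; rewrite powersetE => s1.
apply: eq_bigr => X2; rewrite powersetE => s2.
apply: eq_bigr => X3; rewrite powersetE => s3.
rewrite percPU ?disj12nu ?setUSS // percPU ?disj12 //.
rewrite (conn_split hs12 hVV) //.
- by move=> u w; apply: hX1.
- by move=> u w; apply: hX2.
Qed.

Lemma main (bG : bunkbed_holds e R Gb) (bH : bunkbed_holds e R Hb) (x y : T) :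
  x \in Gb -> y \in Hb ->
  perc_conn (bb_edges e [set: T]) mu (x, false) (y, true)
  <= perc_conn (bb_edges e [set: T]) mu (x, false) (y, false).
Proof.
move=> xG yH.
have aV : (x, false) \in V1 by rewrite /V1 in_setX in_setT xG.
have bV : forall b, (y, b) \in V2 by move=> b; rewrite /V2 in_setX in_setT yH.
pose mu0 := fun f => if f == nu then 0 else mu f.
have w0 : forall B, is_weight (bb_edges e B) mu0.
  move=> B f hf; rewrite /mu0; case: ifP => _; first by rewrite lexx ler01.
  exact: hmu (bb_sub hf).
have nnu : forall a c (bb : bool), ([set (a, bb); (c, bb)] == nu) = false.
  move=> a c bb; apply/negbTE/negP => /eqP /setP /(_ (v, ~~ bb)).
  by rewrite !inE !xpair_eqE; case: bb; rewrite /= ?andbF ?eqxx.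
have s0 : forall B, bb_symmetric e B mu0.
  by move=> B a c _ _ hac; rewrite /mu0 !nnu; apply: hsym; rewrite ?inE.
set s1 : U := (v, false); set s2 : U := (v, true).
have DG : 0 <= \sum_(X1 in powerset E1) percP E1 mu X1 *
   ((open_conn X1 (x, false) s1)%:R - (open_conn X1 (x, false) s2)%:R).
  have := bG mu0 (w0 _) (s0 _) x v xG vG.
  rewrite -subr_ge0 (EB_split vG) /mu0 !drop0 ?in_setD1 ?eqxx //.
  by rewrite -sumrB; under eq_bigr do rewrite -mulrBr.
have DH : 0 <= \sum_(X2 in powerset E2) percP E2 mu X2 *
   ((open_conn X2 (y, false) s1)%:R - (open_conn X2 (y, false) s2)%:R).
  have := bH mu0 (w0 _) (s0 _) y v yH vH.
  rewrite -subr_ge0 (EB_split vH) /mu0 !drop0 ?in_setD1 ?eqxx //.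
  by rewrite -sumrB; under eq_bigr do rewrite -mulrBr.
have D3 : \sum_(X3 in powerset [set nu]) percP [set nu] mu X3 * (1 - (nu \in X3)%:R)
    = 1 - mu nu.
  by rewrite sum_pow1 percP1_0 percP1_1 !inE eqxx /= subr0 subrr mulr0 addr0 mulr1.
have N3 : 0 <= 1 - mu nu.
  by have /andP[_ h] := hmu (nu_E (in_setT v)); rewrite subr_ge0.
rewrite -subr_ge0 (Pform aV (bV false)) (Pform aV (bV true)).
rewrite -sumrB.
have gcE : forall (X : {set {set U}}) (a : U), open_conn X s1 s2 ->
    open_conn X a s1 = open_conn X a s2.
  move=> X a h; apply/idP/idP => h'.
  - exact: oc_trans h' h.
  - by apply: oc_trans h' _; rewrite oc_sym.
rewrite (_ : \sum_(i in powerset E1) _ =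
  \sum_(X1 in powerset E1) \sum_(X2 in powerset E2) \sum_(X3 in powerset [set nu])
   ((percP E1 mu X1 * ((open_conn X1 (x, false) s1)%:R - (open_conn X1 (x, false) s2)%:R)) *
    (percP E2 mu X2 * ((open_conn X2 (y, false) s1)%:R - (open_conn X2 (y, false) s2)%:R)) *
    (percP [set nu] mu X3 * (1 - (nu \in X3)%:R)))); last first.
  apply: eq_bigr => X1 _.
  rewrite [X in _ - X]sum_flip -sumrB; apply: eq_bigr => X2; rewrite powersetE => hX2.
  rewrite percP_fSS // !oc_fSS /fl /= [open_conn X2 (v, true) (v, false)]oc_sym.
  rewrite -sumrB; apply: eq_bigr => X3 _.
  rewrite -mulrBr Cf_diff; first by ring.
  - exact: gcE.
  - exact: gcE.
rewrite sum3 D3.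
by apply: mulr_ge0 => //; apply: mulr_ge0.
Qed.
End Weights.
End Graph.
End Aux.

Local Open Scope ring_scope.

Theorem lemma3p4 (R : realType) (T : finType) (e : rel T)
    (e_sym : symmetric e) (e_irr : irreflexive e)
    (v : T) (hcut : cut_vertex e v)
    (I : {set {set T}}) (hI : I \subset components e [set~ v])
    (mu : {set (T * bool)} -> R)
    (hmu : is_weight (bb_edges e [set: T]) mu)
    (hsym : bb_symmetric e [set: T] mu) :
  let Gbar := v |: \bigcup_(C in I) C in
  let Hbar := v |: \bigcup_(C in components e [set~ v] :\: I) C in
  bunkbed_holds e R Gbar -> bunkbed_holds e R Hbar ->
  forall x y, x \in Gbar -> y \in Hbar ->
    perc_conn (bb_edges e [set: T]) mu (x, false) (y, true)
    <= perc_conn (bb_edges e [set: T]) mu (x, false) (y, false).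
Proof.
move=> Gbar Hbar bG bH x y xG yH.
exact: (Aux.main e_sym e_irr hI hmu hsym bG bH xG yH).
Qed.
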